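(* Let $\pi$ be an $r$-homogeneous strongly log-concave distribution with $r\ge 2$ and associated matroid $\mathcal{M}$. Let $f^{(2)}:\mathcal{M}(2)\to\mathbb{R}_{\ge0}$ and $f^{(1)}=P^{\uparrow}_1 f^{(2)}$, i.e. $f^{(1)}(v)=\sum_{S\in\mathcal{M}(2),v\in S}\frac{w(S)}{w(\{v\})}f^{(2)}(S)$. Then $$\mathrm{Ent}_{\pi_2}(f^{(2)})\ge 2\,\mathrm{Ent}_{\pi_1}(f^{(1)}).$$
   Context: $\pi:2^{[n]}\to\mathbb{R}_{\ge0}$ has generating polynomial $g_\pi(x)=\sum_S\pi(S)\prod_{i\in S}x_i$; $r$-homogeneous means the support consists of $r$-sets; strongly log-concave means for every $J\subseteq[n]$, $\nabla^2\log(\partial_J g_\pi)$ is negative semidefinite at the all-ones vector. The support $\mathcal{B}$ is the set of bases of a rank-$r$ matroid $\mathcal{M}=(E,\mathcal{I})$; $\mathcal{M}(k)$ = independent sets of size $k$. Weights: $w(I)=(r-|I|)!\sum_{B\in\mathcal{B},B\supseteq I}\pi(B)$ for $I\in\mathcal{I}$; $\pi_k(I)=w(I)/\sum_{I'\in\mathcal{M}(k)}w(I')$ on $\mathcal{M}(k)$ (identify $\mathcal{M}(1)$ with elements $v$). $\mathrm{Ent}_\mu(f)=\mathbb{E}_\mu(f\log f)-\mathbb{E}_\mu f\log\mathbb{E}_\mu f$ with $0\log0=0$. *)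

(* Defs.v *)
From mathcomp Require Import all_boot all_order all_algebra.
From mathcomp Require Import mpoly.
From mathcomp Require Import reals exp.

Set Implicit Arguments.
Unset Strict Implicit.
Unset Printing Implicit Defensive.

Import Order.TTheory GRing.Theory Num.Theory.
Local Open Scope ring_scope.

Section SLC.
Variables (R : realType) (n : nat).

Definition gen_poly (pi : {set 'I_n} -> R) : {mpoly R[n]} :=
  \sum_(S : {set 'I_n}) pi S *: \prod_(i in S) 'X_i.

Definition homogeneous (r : nat) (pi : {set 'I_n} -> R) : Prop :=
  forall S, pi S != 0 -> #|S| = r.

Definition partialJ (J : {set 'I_n}) (p : {mpoly R[n]}) : {mpoly R[n]} :=
  foldr (fun i q => mderiv i q) p (enum J).

Definition ones : 'I_n -> R := fun _ => 1.

(* Hessian of log p, evaluated at the all-ones vector: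
   d_i d_j log p = (p * d_i d_j p - d_i p * d_j p) / p^2. *)
Definition hess_log_at1 (p : {mpoly R[n]}) (i j : 'I_n) : R :=
  let P := p.@[ones] in
  (P * (mderiv i (mderiv j p)).@[ones]
     - (mderiv i p).@[ones] * (mderiv j p).@[ones]) / P ^+ 2.

Definition neg_semidef (M : 'I_n -> 'I_n -> R) : Prop :=
  forall v : 'I_n -> R, \sum_(i < n) \sum_(j < n) v i * M i j * v j <= 0.

Definition strongly_log_concave (pi : {set 'I_n} -> R) : Prop :=
  forall J : {set 'I_n}, neg_semidef (hess_log_at1 (partialJ J (gen_poly pi))).

(* associated matroid: bases = support of pi; independent = subsets of bases *)
Definition indep (pi : {set 'I_n} -> R) (I : {set 'I_n}) : bool :=
  [exists B : {set 'I_n}, (pi B != 0) && (I \subset B)].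

Definition Mk (pi : {set 'I_n} -> R) (k : nat) : {set {set 'I_n}} :=
  [set I | indep pi I & #|I| == k].

Definition wt (r : nat) (pi : {set 'I_n} -> R) (I : {set 'I_n}) : R :=
  ((r - #|I|)`!)%:R * \sum_(B : {set 'I_n} | I \subset B) pi B.

Definition pik (r : nat) (pi : {set 'I_n} -> R) (k : nat) (I : {set 'I_n}) : R :=
  if I \in Mk pi k then wt r pi I / \sum_(I' in Mk pi k) wt r pi I' else 0.

Definition up1 (r : nat) (pi : {set 'I_n} -> R) (f2 : {set 'I_n} -> R)
  (v : 'I_n) : R :=
  \sum_(S in Mk pi 2 | v \in S) wt r pi S / wt r pi [set v] * f2 S.

End SLC.

Definition xlogx (R : realType) (x : R) : R := if x == 0 then 0 else x * ln x.

Definition Ent (R : realType) (T : finType) (mu f : T -> R) : R :=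
  \sum_(x : T) mu x * xlogx (f x) - xlogx (\sum_(x : T) mu x * f x).

(* Main.v *)
Require Import Defs.
From mathcomp Require Import all_boot all_order all_algebra.
From mathcomp Require Import mpoly.
From mathcomp Require Import reals exp.
From mathcomp Require Import ring lra zify.
Set Implicit Arguments.
Unset Strict Implicit.
Import Order.TTheory GRing.Theory Num.Theory.
Local Open Scope ring_scope.



Section Abs.
Variable R : realType.

Lemma xlogxE (x : R) : xlogx x = x * ln x.
Proof. by rewrite /xlogx; case: eqP => // ->; rewrite mul0r. Qed.

Lemma ln_le_sub1 (y : R) : 0 < y -> ln y <= y - 1.
Proof.
move=> y0; have := @le_ln1Dx R (y - 1).
rewrite (addrC 1) subrK; apply; lra.
Qed.

Lemma sum_ge_term (T : finType) (G : T -> R) (a : T) :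
  (forall x, 0 <= G x) -> G a <= \sum_x G x.
Proof.
move=> G0; rewrite (bigD1 a) //= lerDl; exact: sumr_ge0.
Qed.

Lemma ent_abs (T : finType) (p F : T -> T -> R) (q f : T -> R) :
  (forall v u, 0 <= p v u) ->
  (forall v u, p v u = p u v) ->
  (forall v u, F v u = F u v) ->
  (forall v u, 0 <= p v u * F v u) ->
  (forall v, 0 <= f v) ->
  (forall v, q v * f v = \sum_u p v u * F v u) ->
  \sum_v \sum_u p v u * (f v * f u) <= (\sum_v q v * f v) ^+ 2 ->
  2 * (\sum_v q v * xlogx (f v) - xlogx (\sum_v q v * f v)) <=
  \sum_v \sum_u p v u * xlogx (F v u) - xlogx (\sum_v \sum_u p v u * F v u).
Proof.
move=> hp0 hps hFs hpF hf0 hqf hRCS.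
set m := \sum_v \sum_u p v u * F v u.
have hm : \sum_v q v * f v = m by apply: eq_bigr => v _; rewrite hqf.
rewrite hm in hRCS *.
have hA : \sum_v q v * xlogx (f v) = \sum_v \sum_u p v u * F v u * ln (f v).
  apply: eq_bigr => v _; rewrite xlogxE mulrA hqf mulr_suml //.
have hB : \sum_v \sum_u p v u * F v u * ln (f v)
        = \sum_v \sum_u p v u * F v u * ln (f u).
  rewrite exchange_big /=; apply: eq_bigr => v _; apply: eq_bigr => u _.
  by rewrite hps hFs.
have h2 : 2 * (\sum_v q v * xlogx (f v)) =
   \sum_v \sum_u p v u * F v u * (ln (f v) + ln (f u)).
  rewrite hA mulr2n mulrDl mul1r {2}hB -big_split /=; apply: eq_bigr => v _.
  rewrite -big_split /=; apply: eq_bigr => u _; by rewrite mulrDr.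
have hmm : m * ln m = \sum_v \sum_u p v u * F v u * ln m.
  by rewrite /m mulr_suml; apply: eq_bigr => v _; rewrite mulr_suml.
suff key : 0 <= \sum_v \sum_u p v u * F v u *
              (ln (F v u) - (ln (f v) + ln (f u)) + ln m).
  rewrite mulrBr h2 !xlogxE.
  have -> : \sum_v \sum_u p v u * xlogx (F v u)
     = \sum_v \sum_u p v u * F v u * ln (F v u).
    by apply: eq_bigr => v _; apply: eq_bigr => u _; rewrite xlogxE mulrA.
  have E : \sum_v \sum_u p v u * F v u *
              (ln (F v u) - (ln (f v) + ln (f u)) + ln m) =
       \sum_v \sum_u p v u * F v u * ln (F v u)
       - \sum_v \sum_u p v u * F v u * (ln (f v) + ln (f u)) + m * ln m.
    rewrite hmm -sumrB -big_split /=; apply: eq_bigr => v _.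
    rewrite -sumrB -big_split /=; apply: eq_bigr => u _.
    by rewrite -mulrBr -mulrDr.
  rewrite E in key.
  rewrite mulr2n mulrDl mul1r. lra.
have pF0 : forall v u, p v u * F v u != 0 -> 0 < p v u /\ 0 < F v u.
  move=> v u h; have h1 := hpF v u.
  have hp : 0 < p v u.
    rewrite lt_neqAle hp0 andbT eq_sym; apply/eqP => e; move: h; by rewrite e mul0r eqxx.
  split => //; rewrite -(pmulr_rgt0 _ hp) lt_neqAle h1 andbT eq_sym //.
have fpos : forall v u, p v u * F v u != 0 -> 0 < f v.
  move=> v u h.
  have : 0 < q v * f v.
    have hs := @sum_ge_term _ (fun u => p v u * F v u) u (hpF v).
    rewrite hqf; apply: lt_le_trans hs.
    by rewrite lt_neqAle eq_sym h hpF.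
  move=> h'; rewrite lt_neqAle hf0 andbT; apply/eqP => e; move: h'.
  by rewrite -e mulr0 ltxx.
have m0 : 0 <= m by apply: sumr_ge0 => v _; apply: sumr_ge0.
case: (eqVneq m 0) => [me|mne].
  have z : forall v u, p v u * F v u = 0.
    move=> v u; move/eqP: me; rewrite psumr_eq0; last by move=> i _; apply: sumr_ge0.
    move/allP/(_ v (mem_index_enum v)) => /=; rewrite psumr_eq0 //.
    by move/allP/(_ u (mem_index_enum u)) => /= /eqP.
  by rewrite big1 // => v _; rewrite big1 // => u _; rewrite z mul0r.
have mpos : 0 < m by rewrite lt_neqAle eq_sym mne m0.
have term : forall v u, p v u * F v u - p v u * (f v * f u) / m <=
   p v u * F v u * (ln (F v u) - (ln (f v) + ln (f u)) + ln m).
  move=> v u; case: (eqVneq (p v u * F v u) 0) => [e|ne].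
    rewrite e mul0r sub0r oppr_le0; apply: divr_ge0 => //.
    by apply: mulr_ge0 => //; apply: mulr_ge0.
  have [hp hF] := pF0 v u ne.
  have hfv := fpos v u ne.
  have hfu : 0 < f u by apply: (fpos u v); rewrite hps hFs.
  have y0 : 0 < f v * f u / (F v u * m).
    by apply: divr_gt0; apply: mulr_gt0.
  have := ln_le_sub1 y0.
  rewrite ln_div ?lnM ?posrE ?mulr_gt0 //.
  move=> hl.
  have hpF' : 0 < p v u * F v u by apply: mulr_gt0.
  have : p v u * F v u * (1 - f v * f u / (F v u * m)) <=
         p v u * F v u * (ln (F v u) - (ln (f v) + ln (f u)) + ln m).
    rewrite ler_pM2l //; lra.
  apply: le_trans; rewrite mulrBr mulr1 lerD2l lerN2.
  rewrite le_eqVlt; apply/orP; left; apply/eqP; field; rewrite ?gt_eqF // ?mulf_neq0 ?gt_eqF //.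
apply: le_trans (_ : 0 <= \sum_v \sum_u (p v u * F v u - p v u * (f v * f u) / m)) _.
  have -> : \sum_v \sum_u (p v u * F v u - p v u * (f v * f u) / m) =
     m - (\sum_v \sum_u p v u * (f v * f u)) / m.
    rewrite mulr_suml -sumrB; apply: eq_bigr => v _.
    by rewrite mulr_suml -sumrB.
  rewrite subr_ge0 ler_pdivrMr // -expr2 //.
apply: ler_sum => v _; apply: ler_sum => u _; exact: term.
Qed.
End Abs.


Lemma rcs_abs (R : realFieldType) (T : finType) (C : T -> T -> R) (d : T -> R)
   (P k : R) :
  0 < P -> 0 < k ->
  (forall i j, C i j = C j i) ->
  (forall i, \sum_j C i j = (k - 1) * d i) ->
  \sum_i d i = k * P ->
  (forall v : T -> R, P * (\sum_i \sum_j v i * C i j * v j) <= (\sum_i d i * v i) ^+ 2) ->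
  forall x : T -> R,
  k * P * (\sum_i \sum_j x i * C i j * x j) <= (k - 1) * (\sum_i d i * x i) ^+ 2.
Proof.
move=> P0 k0 Cs Crow dsum H x.
set D := \sum_i d i * x i.
set t := D / (k * P).
have := H (fun i => x i - t) => /=.
have -> : \sum_i d i * (x i - t) = 0.
  rewrite (eq_bigr (fun i => d i * x i - d i * t)); last by move=> i _; rewrite mulrBr.
  rewrite sumrB -mulr_suml dsum /t /D; field; rewrite ?mulf_neq0 ?gt_eqF //.
have E : \sum_i \sum_j (x i - t) * C i j * (x j - t) =
   \sum_i \sum_j x i * C i j * x j - t * (\sum_i \sum_j C i j * x j)
   - t * (\sum_i \sum_j x i * C i j) + t ^+ 2 * (\sum_i \sum_j C i j).
  rewrite !mulr_sumr -!sumrB -big_split /=; apply: eq_bigr => i _.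
  rewrite !mulr_sumr -!sumrB -big_split /=; apply: eq_bigr => j _.
  ring.
have S2 : \sum_i \sum_j C i j * x j = (k - 1) * D.
  rewrite exchange_big /= /D mulr_sumr; apply: eq_bigr => j _.
  rewrite -mulr_suml (eq_bigr (fun i => C j i)); last by move=> i _; rewrite Cs.
  by rewrite Crow mulrA.
have S3 : \sum_i \sum_j x i * C i j = (k - 1) * D.
  rewrite /D mulr_sumr; apply: eq_bigr => i _.
  rewrite -mulr_sumr Crow; ring.
have S4 : \sum_i \sum_j C i j = (k - 1) * (k * P).
  rewrite (eq_bigr (fun i => (k - 1) * d i)); last by move=> i _; rewrite Crow.
  by rewrite -mulr_sumr dsum.
rewrite E S2 S3 S4 expr0n /= => h.
have h' : \sum_i \sum_j x i * C i j * x j - t * ((k - 1) * D) -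
     t * ((k - 1) * D) + t ^+ 2 * ((k - 1) * (k * P)) <= 0.
  by rewrite -(pmulr_rle0 _ P0).
have -> : (k - 1) * D ^+ 2 = k * P * (t * ((k - 1) * D) + t * ((k - 1) * D) - t ^+ 2 * ((k - 1) * (k * P))).
  rewrite /t; field; rewrite ?mulf_neq0 ?gt_eqF //.
rewrite ler_pM2l ?mulr_gt0 //; lra.
Qed.


Section Poly.
Variables (R : realType) (n : nat).

Lemma mderivXU (i k : 'I_n) : mderiv i ('X_k : {mpoly R[n]}) = (k == i)%:R.
Proof.
rewrite mderivX mnm1E.
case: eqP => [->|_]; last by rewrite scale0r.
have -> : (U_(i) - U_(i))%MM = 0%MM.
  by apply/mnmP => j; rewrite mnmE mnm0E subnn.
by rewrite scale1r mpolyX0.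
Qed.


Definition Xp (A : {set 'I_n}) : {mpoly R[n]} := \prod_(k in A) 'X_k.

Lemma dXp0 (i : 'I_n) (A : {set 'I_n}) : i \notin A -> mderiv i (Xp A) = 0.
Proof.
move=> iA; rewrite /Xp.
apply: (big_ind (fun p : {mpoly R[n]} => mderiv i p = 0)).
- exact: mderivC 1.
- by move=> x y hx hy; rewrite mderivM hx hy mul0r mulr0 addr0.
- move=> k kA; rewrite mderivXU; case: eqP => // e.
  by move: iA; rewrite -e kA.
Qed.

Lemma dXp (i : 'I_n) (A : {set 'I_n}) :
  mderiv i (Xp A) = if i \in A then Xp (A :\ i) else 0.
Proof.
case: ifP => iA; last by rewrite dXp0 // iA.
have e : \prod_(k in A | k != i) ('X_k : {mpoly R[n]}) = Xp (A :\ i).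
  by apply: eq_bigl => k; rewrite in_setD1 andbC.
rewrite /Xp (bigD1 i) //= e mderivM mderivXU eqxx mul1r dXp0 ?mulr0 ?addr0 //.
by rewrite in_setD1 eqxx.
Qed.

Lemma evXp (A : {set 'I_n}) : (Xp A).@[ones R (n:=n)] = 1 :> R.
Proof.
rewrite /Xp (big_morph _ (mevalM _) (meval1 _)).
by apply: big1 => k _; rewrite mevalXU.
Qed.

Lemma ev_sum (pi : {set 'I_n} -> R) (h : {set 'I_n} -> {set 'I_n}) (b : {set 'I_n} -> bool) :
  (\sum_S pi S *: (if b S then Xp (h S) else 0)).@[ones R (n:=n)] =
  \sum_(S | b S) pi S.
Proof.
rewrite (big_morph _ (mevalD _) (meval0 _)) [RHS]big_mkcond /=.
apply: eq_bigr => S _; rewrite mevalZ; case: (b S).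
  by rewrite evXp mulr1.
by rewrite meval0 mulr0.
Qed.

Lemma mderiv_sum (i : 'I_n) (F : {set 'I_n} -> {mpoly R[n]}) :
  mderiv i (\sum_S F S) = \sum_S mderiv i (F S).
Proof. by rewrite raddf_sum. Qed.

Lemma gen_eval0 (pi : {set 'I_n} -> R) :
  (gen_poly pi).@[ones R (n:=n)] = \sum_S pi S.
Proof.
have -> : gen_poly pi = \sum_S pi S *: (if (fun _ => true) S then Xp (id S) else 0) by [].
by rewrite (ev_sum pi id (fun _ => true)).
Qed.

Lemma gen_eval1 (pi : {set 'I_n} -> R) (j : 'I_n) :
  (mderiv j (gen_poly pi)).@[ones R (n:=n)] = \sum_(S : {set 'I_n} | j \in S) pi S.
Proof.
rewrite /gen_poly mderiv_sum.
under eq_bigr do rewrite mderivZ -/(Xp _) dXp.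
by rewrite (ev_sum pi (fun S : {set 'I_n} => S :\ j) (fun S : {set 'I_n} => j \in S)).
Qed.

Lemma gen_eval2 (pi : {set 'I_n} -> R) (i j : 'I_n) :
  (mderiv i (mderiv j (gen_poly pi))).@[ones R (n:=n)] =
  \sum_(S : {set 'I_n} | (i \in S) && (j \in S) && (i != j)) pi S.
Proof.
rewrite /gen_poly mderiv_sum mderiv_sum.
under eq_bigr do rewrite mderivZ -/(Xp _) dXp mderivZ
  (fun_if (mderiv i)) mderiv0 dXp.
rewrite -(ev_sum pi (fun S : {set 'I_n} => S :\ j :\ i)
   (fun S : {set 'I_n} => (i \in S) && (j \in S) && (i != j))).
congr meval; apply: eq_bigr => S _.
rewrite in_setD1.
by case: (j \in S); case: (i \in S); case: (i != j).
Qed.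

End Poly.

Lemma hess_alg (R : realFieldType) (T : finType) (P : R) (C : T -> T -> R) (d v : T -> R) :
  0 < P ->
  \sum_i \sum_j v i * ((P * C i j - d i * d j) / P ^+ 2) * v j <= 0 ->
  P * (\sum_i \sum_j v i * C i j * v j) <= (\sum_i d i * v i) ^+ 2.
Proof.
move=> P0 h.
have E : \sum_i \sum_j v i * ((P * C i j - d i * d j) / P ^+ 2) * v j =
   (P * (\sum_i \sum_j v i * C i j * v j) - (\sum_i d i * v i) ^+ 2) / P ^+ 2.
  rewrite [X in _ - X]expr2 [X in _ - X]mulr_suml mulr_sumr -sumrB mulr_suml; apply: eq_bigr => i _.
  rewrite mulr_sumr mulr_sumr -sumrB mulr_suml; apply: eq_bigr => j _.
  ring.
rewrite E in h; rewrite -subr_le0.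
move: h; rewrite ler_pdivrMr ?mul0r //; exact: exprn_gt0.
Qed.

Section Hess.
Variables (R : realType) (n : nat).

Lemma hess_ineq (pi : {set 'I_n} -> R) :
  strongly_log_concave pi -> 0 < \sum_S pi S ->
  forall v : 'I_n -> R,
  (\sum_S pi S) * (\sum_i \sum_j v i *
      (\sum_(S : {set 'I_n} | (i \in S) && (j \in S) && (i != j)) pi S) * v j)
  <= (\sum_i (\sum_(S : {set 'I_n} | i \in S) pi S) * v i) ^+ 2.
Proof.
move=> slc P0 v.
have := slc set0 v.
rewrite /partialJ enum_set0 /= /hess_log_at1.
rewrite gen_eval0.
under eq_bigr do under eq_bigr do rewrite gen_eval2 !gen_eval1.
set P := \sum_S pi S.
set C := fun i j => \sum_(S : {set 'I_n} | (i \in S) && (j \in S) && (i != j)) pi S.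
set d := fun i => \sum_(S : {set 'I_n} | i \in S) pi S.
exact: hess_alg.
Qed.
End Hess.


Section Comb.
Variables (R : realType) (n : nat).
Implicit Types (S B : {set 'I_n}).

Lemma sum_sing (H : {set 'I_n} -> R) :
  \sum_(S : {set 'I_n} | #|S| == 1%N) H S = \sum_v H [set v].
Proof.
transitivity (\sum_(v in [set: 'I_n]) H [set v]); last first.
  by apply: eq_bigl => v; rewrite inE.
rewrite -(big_imset H (h := fun v : 'I_n => [set v]) (A := setT)) /=; last first.
  by move=> x y _ _; apply: set1_inj.
rewrite big_mkcond [RHS]big_mkcond; apply: eq_bigr => S _.
have -> : (S \in [set [set v] | v in [set: 'I_n]]) = (#|S| == 1%N).
  apply/imsetP/cards1P => [[v _ ->]|[v ->]]; by exists v.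
by [].
Qed.

Lemma sum_pairv (H : {set 'I_n} -> R) (v : 'I_n) :
  \sum_(S : {set 'I_n} | (#|S| == 2%N) && (v \in S)) H S = \sum_(u | u != v) H [set v; u].
Proof.
transitivity (\sum_(u in [set u | u != v]) H [set v; u]); last first.
  by apply: eq_bigl => u; rewrite inE.
rewrite -(big_imset H (h := fun u : 'I_n => [set v; u]) (A := [set u | u != v])) /=;
  last first.
  move=> x y; rewrite !inE => xv yv e.
  have : x \in [set v; y] by rewrite -e !inE eqxx orbT.
  by rewrite !inE (negbTE xv) /= => /eqP.
rewrite [LHS]big_mkcond [RHS]big_mkcond; apply: eq_bigr => S _.
have -> : (S \in [set [set v; u] | u in [set u | u != v]]) = (#|S| == 2%N) && (v \in S).
  apply/imsetP/andP => [[u]|[/cards2P [x [y [xy ->]]]]].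
    rewrite inE => uv ->; rewrite cards2 !inE eqxx (eq_sym v u) uv; done.
  rewrite !inE => /orP [] /eqP ->.
    by exists y; rewrite // inE eq_sym.
  by exists x; rewrite ?inE // setUC.
by [].
Qed.

Lemma sum_pair (H : {set 'I_n} -> R) :
  2 * \sum_(S : {set 'I_n} | #|S| == 2%N) H S = \sum_v \sum_(u | u != v) H [set v; u].
Proof.
under [RHS]eq_bigr do rewrite -sum_pairv.
rewrite [RHS](exchange_big_dep (fun S => #|S| == 2%N)) /=; last by move=> v S _ /andP[].
rewrite mulr_sumr; apply: eq_bigr => S /eqP S2.
rewrite (eq_bigl (fun v => v \in S)); last by move=> v; rewrite S2 eqxx.
by rewrite sumr_const S2 mulr_natl.
Qed.

End Comb.

Section Pi.
Variables (R : realType) (n r : nat) (pi : {set 'I_n} -> R).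
Hypothesis pi0 : forall S, 0 <= pi S.
Hypothesis hom : homogeneous r pi.

Definition dv (i : 'I_n) := \sum_(B : {set 'I_n} | i \in B) pi B.
Definition Cm (i j : 'I_n) :=
  \sum_(B : {set 'I_n} | (i \in B) && (j \in B) && (i != j)) pi B.
Definition Ptot := \sum_(B : {set 'I_n}) pi B.

Lemma dv_ge0 i : 0 <= dv i. Proof. exact: sumr_ge0. Qed.
Lemma Cm_ge0 i j : 0 <= Cm i j. Proof. exact: sumr_ge0. Qed.
Lemma Cm_sym i j : Cm i j = Cm j i.
Proof. by apply: eq_bigl => B; rewrite (andbC (i \in B)) eq_sym. Qed.
Lemma Cm_diag i : Cm i i = 0.
Proof. by rewrite /Cm big1 // => B /andP[_]; rewrite eqxx. Qed.

Lemma wt_ge0 S : 0 <= wt r pi S.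
Proof. by apply: mulr_ge0; [exact: ler0n | exact: sumr_ge0]. Qed.

Lemma wt1 v : wt r pi [set v] = ((r - 1)`!)%:R * dv v.
Proof.
rewrite /wt cards1; congr (_ * _); apply: eq_bigl => B; by rewrite sub1set.
Qed.

Lemma wt2 v u : u != v -> wt r pi [set v; u] = ((r - 2)`!)%:R * Cm v u.
Proof.
move=> uv; rewrite /wt cards2 eq_sym uv; congr (_ * _); apply: eq_bigl => B.
by rewrite subUset !sub1set eq_sym uv andbT.
Qed.

Lemma wt_nindep S : ~~ indep pi S -> wt r pi S = 0.
Proof.
move=> ni; rewrite /wt big1 ?mulr0 // => B SB.
apply/eqP; apply: contraNT ni => piB; apply/existsP; exists B; by rewrite piB.
Qed.

Lemma sum_Mk k (Q : pred {set 'I_n}) (G : {set 'I_n} -> R) :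
  (forall S, ~~ indep pi S -> G S = 0) ->
  \sum_(S : {set 'I_n} | (S \in Mk pi k) && Q S) G S =
  \sum_(S : {set 'I_n} | (#|S| == k) && Q S) G S.
Proof.
move=> hG; rewrite big_mkcond [RHS]big_mkcond; apply: eq_bigr => S _.
rewrite /Mk inE; case: (boolP (indep pi S)) => [//|ni]; rewrite hG //.
by case: ifP.
Qed.

Lemma Cm_row v : \sum_u Cm v u = (r - 1)%:R * dv v.
Proof.
rewrite /Cm (exchange_big_dep (fun B : {set 'I_n} => v \in B)) /=; last by move=> u B _ /andP[/andP[]].
rewrite /dv mulr_sumr; apply: eq_bigr => B vB.
rewrite (eq_bigl (fun u => u \in B :\ v)); last first.
  by move=> u; rewrite in_setD1 vB /= andbC eq_sym.
rewrite sumr_const mulr_natl; case: (eqVneq (pi B) 0) => [->|ne]; first by rewrite !mul0rn.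
by congr (_ *+ _); have := cardsD1 v B; rewrite vB (hom ne) add1n => ->; rewrite subSS subn0.
Qed.

Lemma dv_sum : \sum_v dv v = r%:R * Ptot.
Proof.
rewrite /dv (exchange_big_dep predT) //= /Ptot mulr_sumr; apply: eq_bigr => B _.
rewrite sumr_const mulr_natl; case: (eqVneq (pi B) 0) => [->|ne]; first by rewrite !mul0rn.
by rewrite (hom ne).
Qed.

Lemma Cm_le_dv v u : Cm v u <= dv v.
Proof.
rewrite /Cm /dv [X in _ <= X]big_mkcond [X in X <= _]big_mkcond.
apply: ler_sum => B _; case: (v \in B) => //=; by case: ifP.
Qed.

Lemma Cm_Mk v u : Cm v u != 0 -> [set v; u] \in Mk pi 2.
Proof.
move=> ne; have uv : u != v.
  by apply: contraNneq ne => ->; rewrite Cm_diag.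
rewrite /Mk inE cards2 (eq_sym v u) uv andbT.
apply: contraNT ne => ni; rewrite /Cm big1 // => B /andP[/andP[vB uB] _].
apply/eqP; apply: contraNT ni => piB; apply/existsP; exists B.
by rewrite piB subUset !sub1set vB uB.
Qed.

End Pi.

Theorem lemma4p2 (R : realType) (n r : nat) (pi : {set 'I_n} -> R)
    (f2 : {set 'I_n} -> R) :
  (2 <= r)%N ->
  (forall S, 0 <= pi S) ->
  homogeneous r pi ->
  strongly_log_concave pi ->
  (forall S, S \in Mk pi 2 -> 0 <= f2 S) ->
  2 * Ent (fun v : 'I_n => pik r pi 1 [set v]) (up1 r pi f2)
    <= Ent (pik r pi 2) f2.
Proof.
move=> r2 pi0 hom slc f20.
set K : R := ((r - 2)`!)%:R.
have K0 : 0 < K by rewrite /K ltr0n fact_gt0.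
set r' : R := (r - 1)%:R.
have r'0 : 0 < r' by rewrite /r' ltr0n subn_gt0 (leq_trans _ r2).
have r'E : r' = r%:R - 1 by rewrite /r' natrB ?(leq_trans _ r2).
have K1E : ((r - 1)`!)%:R = K * r' :> R.
  have e : (r - 1 = (r - 2).+1)%N by lia.
  by rewrite e factS natrM mulrC /r' e.
have P0 : 0 <= Ptot pi by apply: sumr_ge0.
set Z1 := \sum_(I in Mk pi 1) wt r pi I.
have Z1E : Z1 = K * r' * (r%:R * Ptot pi).
  rewrite /Z1 (eq_bigl (fun I => (I \in Mk pi 1) && predT I)); last by move=> I; rewrite andbT.
  rewrite sum_Mk; last by move=> S; exact: wt_nindep.
  rewrite (eq_bigl (fun I : {set 'I_n} => #|I| == 1%N)); last by move=> I; rewrite andbT.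
  rewrite sum_sing; under eq_bigr do rewrite wt1 K1E.
  by rewrite -mulr_sumr (dv_sum hom).
set Z2 := \sum_(I in Mk pi 2) wt r pi I.
have Z12 : Z1 = 2 * Z2.
  rewrite /Z2 (eq_bigl (fun I => (I \in Mk pi 2) && predT I)); last by move=> I; rewrite andbT.
  rewrite sum_Mk; last by move=> S; exact: wt_nindep.
  rewrite (eq_bigl (fun I : {set 'I_n} => #|I| == 2%N)); last by move=> I; rewrite andbT.
  rewrite sum_pair Z1E.
  have -> : \sum_v \sum_(u | u != v) wt r pi [set v; u] =
      \sum_v \sum_(u | u != v) K * Cm pi v u.
    by apply: eq_bigr => v _; apply: eq_bigr => u uv; rewrite wt2.
  have -> : \sum_v \sum_(u | u != v) K * Cm pi v u = \sum_v K * (r' * dv pi v).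
    apply: eq_bigr => v _; rewrite -mulr_sumr /r' -(Cm_row hom v).
    by rewrite [in RHS](bigD1 v) //= Cm_diag add0r.
  by rewrite -mulr_sumr -mulr_sumr (dv_sum hom) !mulrA.
set p := fun v u => K * Cm pi v u / Z1.
have Z10 : 0 <= Z1 by rewrite Z1E; apply: mulr_ge0; [apply: mulr_ge0; apply/ltW|apply: mulr_ge0].
have p0 : forall v u, 0 <= p v u.
  by move=> v u; apply: divr_ge0 => //; apply: mulr_ge0; [apply/ltW|apply: Cm_ge0].
have pvv : forall v, p v v = 0 by move=> v; rewrite /p Cm_diag mulr0 mul0r.
have pik1 : forall v, pik r pi 1 [set v] = K * r' * dv pi v / Z1.
  move=> v; rewrite /pik -/Z1 -K1E -wt1; case: ifP => // h.
  rewrite wt_nindep ?mul0r //; apply: contraFN h => hi; by rewrite /Mk inE hi cards1.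
have pik2 : forall S : {set 'I_n}, pik r pi 2 S = if #|S| == 2%N then wt r pi S / Z2 else 0.
  move=> S; rewrite /pik -/Z2; case: ifP => h.
    by move: h; rewrite /Mk inE => /andP[_ ->].
  case: ifP => // c; rewrite wt_nindep ?mul0r //; apply: contraFN h => hi.
  by rewrite /Mk inE hi c.
have G1 : forall G : {set 'I_n} -> R,
    \sum_(S : {set 'I_n}) pik r pi 2 S * G S = \sum_v \sum_u p v u * G [set v; u].
  move=> G.
  rewrite (eq_bigr (fun S : {set 'I_n} => if #|S| == 2%N then 2 * (wt r pi S / Z1 * G S) else 0));
    last first.
    move=> S _; rewrite pik2; case: ifP => _; last by rewrite mul0r.
    have h2 : (2 : R) * 2^-1 = 1 by rewrite mulfV // pnatr_eq0.
    rewrite Z12 invfM; transitivity (2 * 2^-1 * (wt r pi S / Z2 * G S)).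
      by rewrite h2 mul1r.
    ring.
  rewrite -big_mkcond /= -mulr_sumr sum_pair; apply: eq_bigr => v _.
  rewrite [RHS](bigD1 v) //= pvv mul0r add0r; apply: eq_bigr => u uv.
  by rewrite wt2 // /p mulrAC.
have hf0 : forall v, 0 <= up1 r pi f2 v.
  move=> v; apply: sumr_ge0 => S /andP[SM _]; apply: mulr_ge0; last exact: f20.
  by apply: divr_ge0; apply: wt_ge0.
have hpF : forall v u, 0 <= p v u * f2 [set v; u].
  move=> v u; case: (eqVneq (Cm pi v u) 0) => [e|ne].
    by rewrite /p e mulr0 !mul0r.
  by apply: mulr_ge0; [exact: p0 | apply: f20; exact: Cm_Mk].
have hqf : forall v, pik r pi 1 [set v] * up1 r pi f2 v =
                     \sum_u p v u * f2 [set v; u].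
  move=> v; rewrite pik1 /up1.
  rewrite (@sum_Mk R n pi 2 (fun S : {set 'I_n} => v \in S)
             (fun S : {set 'I_n} => wt r pi S / wt r pi [set v] * f2 S)); last first.
    by move=> S hS; rewrite wt_nindep // !mul0r.
  rewrite sum_pairv [RHS](bigD1 v) //= pvv mul0r add0r.
  case: (eqVneq (dv pi v) 0) => [e|ne].
    rewrite e mulr0 !mul0r; symmetry; apply: big1 => u _.
    have : Cm pi v u = 0.
      by apply/eqP; rewrite eq_le (Cm_ge0 pi0) andbT; have := Cm_le_dv pi0 v u; rewrite e.
    by move=> c; rewrite /p c mulr0 !mul0r.
  rewrite mulr_sumr; apply: eq_bigr => u uv.
  rewrite wt1 K1E wt2 // /p.
  have a0 : K * r' * dv pi v != 0.
    by apply: mulf_neq0 => //; apply: mulf_neq0; rewrite gt_eqF.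
  transitivity ((K * r' * dv pi v) * (K * r' * dv pi v)^-1 *
                 (K * Cm pi v u / Z1 * f2 [set v; u])); first by ring.
  by rewrite mulfV // mul1r.
set q := fun v : 'I_n => pik r pi 1 [set v].
set f := up1 r pi f2.
have hRCS : \sum_v \sum_u p v u * (f v * f u) <= (\sum_v q v * f v) ^+ 2.
  have LE : \sum_v \sum_u p v u * (f v * f u) =
       K / Z1 * (\sum_v \sum_u f v * Cm pi v u * f u).
    rewrite mulr_sumr; apply: eq_bigr => v _; rewrite mulr_sumr; apply: eq_bigr => u _.
    rewrite /p; ring.
  have RE : \sum_v q v * f v = K * r' / Z1 * (\sum_v dv pi v * f v).
    rewrite mulr_sumr; apply: eq_bigr => v _; rewrite /q pik1; ring.
  rewrite LE RE.
  case: (eqVneq (Ptot pi) 0) => [e|ne].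
    have -> : Z1 = 0 by rewrite Z1E e !mulr0.
    by rewrite invr0 mulr0 mul0r sqr_ge0.
  have Pp : 0 < Ptot pi by rewrite lt_neqAle eq_sym ne P0.
  have k0 : 0 < (r%:R : R) by rewrite ltr0n (leq_trans _ r2).
  have Crow : forall i, \sum_j Cm pi i j = (r%:R - 1) * dv pi i.
    by move=> i; rewrite (Cm_row hom) -r'E.
  have H := @rcs_abs R 'I_n (Cm pi) (dv pi) (Ptot pi) r%:R Pp k0 (@Cm_sym R n pi)
     Crow (dv_sum hom) (hess_ineq slc Pp) f.
  rewrite -r'E in H.
  set X := \sum_v \sum_u f v * Cm pi v u * f u.
  set D := \sum_v dv pi v * f v.
  set A := r%:R * Ptot pi.
  have A0 : 0 < A by apply: mulr_gt0.
  have e1 : K / Z1 * X = (A * X) / (r' * A ^+ 2).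
    rewrite Z1E -/A. field; rewrite ?gt_eqF //.
  have e2 : (K * r' / Z1 * D) ^+ 2 = (r' * D ^+ 2) / (r' * A ^+ 2).
    rewrite Z1E -/A. field; rewrite ?gt_eqF //.
  rewrite e1 e2 ler_pM2r ?invr_gt0 ?mulr_gt0 ?exprn_gt0 //.
rewrite /Ent (G1 (fun S => xlogx (f2 S))) (G1 f2).
apply: (@ent_abs R 'I_n p (fun v u => f2 [set v; u]) q f) => //.
- by move=> v u; rewrite /p Cm_sym.
- by move=> v u; rewrite setUC.
Qed.
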